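(* For integers $k\ge1$, $l\ge0$, $m\ge1$ define \[ \Psi^k_{l,m}(z)=\sum_{0\le p_1<p_2<\dots<p_k}z^{\,l+m(2^{p_1}+2^{p_2}+\dots+2^{p_k})}\in A(D), \] and $\Psi^0_{l,m}(z)=z^l$. Then \[ \mathcal{T}\Psi^k_{l,m}= \begin{cases} \Psi^k_{\frac l2,\frac m2}, & l,m \text{ even},\\[2pt] \Psi^k_{\frac{3l+1}2,\frac{3m}2}, & l \text{ odd},\ m\text{ even},\\[2pt] \Psi^k_{\frac l2,m}+\Psi^{k-1}_{\frac{3(l+m)+1}2,3m}, & l\text{ even},\ m \text{ odd},\\[2pt] \Psi^k_{\frac{3l+1}2,3m}+\Psi^{k-1}_{\frac{l+m}2,m}, & l,m\text{ odd}. \end{cases} \]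
   Context: $T$ is the Collatz map $T(n)=\frac{3n+1}2$ ($n$ odd), $T(n)=\frac n2$ ($n$ even). $D$ is the open unit disk and $A(D)$ the holomorphic functions on $D$. The operator $\mathcal{T}$ acts on $A(D)$ by $\mathcal{T}\big(\sum_{n\ge0}a_nz^n\big)=\sum_{n\ge0}a_nz^{T(n)}$, i.e. $\mathcal{T}z^n=z^{T(n)}$. Thus $\Psi^k_{l,m}$ is the generating function of $\{l+mN: N$ a nonnegative integer with exactly $k$ ones in its binary expansion$\}$. *)

(* Defs.v *)
(* Holomorphic functions on D are represented by their
   Taylor coefficient sequences (nat -> nat suffices: all series involved
   have nonnegative integer coefficients). *)
From mathcomp Require Import all_boot.
Set Implicit Arguments. Unset Strict Implicit. Unset Printing Implicit Defensive.

Definition collatz (n : nat) : nat := if odd n then (3 * n + 1)./2 else n./2.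

(* The operator T on power series: T z^n = z^(T n), extended linearly.
   Coefficient of z^j in T f is the sum of the coefficients a_n of f over
   the (at most two) n with T n = j; any such n satisfies n <= 2 j. *)
Definition Top (a : nat -> nat) (j : nat) : nat :=
  \sum_(n < (2 * j).+1 | collatz n == j) a n.

(* Coefficient of z^j in Psi^k_{l,m} = sum over 0 <= p_1 < ... < p_k of
   z^(l + m (2^p_1 + ... + 2^p_k)): the number of k-element sets S of
   exponents with l + m * sum_{p in S} 2^p = j.  (For m >= 1 every such p
   satisfies p < 2^p <= j, so S ranges over subsets of 'I_j.)  For k = 0
   this gives z^l. *)
Definition Psi (k l m : nat) (j : nat) : nat :=
  #|[set S : {set 'I_j} | (#|S| == k) && (l + m * \sum_(p in S) 2 ^ p == j)]|.

(* Main.v *)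
Require Import Defs.
From mathcomp Require Import all_boot zify.
From Stdlib Require Import Classical.
Set Implicit Arguments. Unset Strict Implicit. Unset Printing Implicit Defensive.

Fixpoint pcf (f N : nat) : nat :=
  match f with 0 => 0 | f'.+1 => odd N + pcf f' N./2 end.
Definition pc N := pcf N N.

Lemma pcf0 f : pcf f 0 = 0.
Proof. by elim: f => //= f ->. Qed.

Lemma pcf_stable f g N : N <= f -> N <= g -> pcf f N = pcf g N.
Proof.
elim: f g N => [|f IH] [|g] N /= hf hg.
- by [].
- have -> : N = 0 by lia. by rewrite pcf0.
- have -> : N = 0 by lia. by rewrite pcf0.
- congr (_ + _); apply: IH; rewrite -divn2; lia.
Qed.

Lemma pcE N : pc N = odd N + pc N./2.
Proof.
case: N => [|n] //.
rewrite /pc; change (pcf n.+1 n.+1) with (odd n.+1 + pcf n (n.+1)./2).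
congr (_ + _); apply: pcf_stable; rewrite -divn2; lia.
Qed.

Lemma pc_double N : pc (2 * N) = pc N.
Proof. by rewrite pcE -divn2 oddM /= mulKn. Qed.

Lemma pc_doubleS N : pc (2 * N + 1) = (pc N).+1.
Proof.
rewrite pcE -divn2 oddD oddM /=.
have -> : (2 * N + 1) %/ 2 = N by lia.
by [].
Qed.

Definition V b (f : nat -> bool) := \sum_(p < b) f p * 2 ^ p.
Definition C b (f : nat -> bool) := \sum_(p < b) (f p : nat).

Lemma VS b f : V b.+1 f = f 0 + 2 * V b (fun n => f n.+1).
Proof.
rewrite /V big_ord_recl /= expn0 muln1 big_distrr /=; congr (_ + _).
by apply: eq_bigr => i _; rewrite /bump /= add1n expnS; lia.
Qed.

Lemma CS b f : C b.+1 f = f 0 + C b (fun n => f n.+1).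
Proof. by rewrite /C big_ord_recl. Qed.

Lemma V_bits b f i : i < b -> odd (V b f %/ 2 ^ i) = f i.
Proof.
elim: i b f => [|i IH] [|b] f //= hi.
- by rewrite expn0 divn1 VS oddD oddM /=; case: (f 0).
- rewrite expnS divnMA VS.
  have -> : (f 0 + 2 * V b (fun n => f n.+1)) %/ 2 = V b (fun n => f n.+1) by lia.
  by rewrite IH.
Qed.

Lemma V_rep b N : N < 2 ^ b -> V b (fun p => odd (N %/ 2 ^ p)) = N.
Proof.
elim: b N => [|b IH] N hN.
- rewrite /V big_ord0; rewrite expn0 in hN; lia.
- rewrite VS /= expn0 divn1.
  have -> : V b (fun n => odd (N %/ 2 ^ n.+1)) = V b (fun n => odd (N %/ 2 %/ 2 ^ n)).
    by apply: eq_bigr => i _; rewrite expnS divnMA.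
  rewrite IH; first by rewrite -modn2; lia.
  rewrite expnS in hN; lia.
Qed.

Lemma C_rep b N : N < 2 ^ b -> C b (fun p => odd (N %/ 2 ^ p)) = pc N.
Proof.
elim: b N => [|b IH] N hN.
- rewrite /C big_ord0; rewrite expn0 in hN; have -> : N = 0 by lia. by [].
- rewrite CS /= expn0 divn1.
  have -> : C b (fun n => odd (N %/ 2 ^ n.+1)) = C b (fun n => odd (N %/ 2 %/ 2 ^ n)).
    by apply: eq_bigr => i _; rewrite expnS divnMA.
  rewrite IH; first by rewrite [in RHS]pcE divn2.
  rewrite expnS in hN; lia.
Qed.

Definition sumS b (S : {set 'I_b}) := \sum_(p in S) 2 ^ p.
Definition memb b (S : {set 'I_b}) (n : nat) := n \in [seq val q | q <- enum S].

Lemma memb_val b (S : {set 'I_b}) (q : 'I_b) : memb S q = (q \in S).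
Proof. by rewrite /memb (mem_map val_inj) mem_enum. Qed.

Lemma sumS_V b (S : {set 'I_b}) : sumS S = V b (memb S).
Proof.
rewrite /sumS /V big_mkcond /=; apply: eq_bigr => i _.
by rewrite memb_val; case: (i \in S) => /=; lia.
Qed.

Lemma sumS_inj b (S1 S2 : {set 'I_b}) : sumS S1 = sumS S2 -> S1 = S2.
Proof.
rewrite !sumS_V => h; apply/setP => i.
by rewrite -!memb_val -(V_bits (memb S1) (ltn_ord i)) h V_bits.
Qed.

Lemma sumS_ex b N : N < 2 ^ b -> exists S : {set 'I_b}, sumS S = N /\ #|S| = pc N.
Proof.
move=> hN; exists [set p : 'I_b | odd (N %/ 2 ^ p)]; split.
- rewrite -[RHS](V_rep hN) /sumS /V big_mkcond /=; apply: eq_bigr => i _.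
  by rewrite inE; case: odd => /=; lia.
- rewrite -(C_rep hN) /C -sum1_card big_mkcond /=; apply: eq_bigr => i _.
  by rewrite inE; case: odd.
Qed.

Definition P k l m j := exists N, pc N = k /\ l + m * N = j.

Lemma PsiP k l m j : 0 < m ->
  Psi k l m j <= 1 /\ (Psi k l m j = 1 <-> P k l m j).
Proof.
move=> hm.
have bnd : forall N, l + m * N = j -> N < 2 ^ j.
  move=> N hN; apply: (@leq_ltn_trans j); last exact: ltn_expl.
  rewrite -hN; apply: (@leq_trans (m * N)); last exact: leq_addl.
  by rewrite leq_pmull.
have le1 : Psi k l m j <= 1.
  apply/card_le1_eqP => S1 S2; rewrite !inE => /andP[_ /eqP h1] /andP[_ /eqP h2].
  apply: sumS_inj; apply/eqP; rewrite -(eqn_pmul2l hm); apply/eqP.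
  rewrite /sumS; lia.
split=> //; split.
- move=> /eqP /cards1P [S hS].
  have : S \in [set S : {set 'I_j} | (#|S| == k) && (l + m * \sum_(p in S) 2 ^ p == j)].
    by rewrite hS set11.
  rewrite inE => /andP[/eqP hk /eqP hj].
  have [S' [e1 e2]] := sumS_ex (bnd _ hj).
  have eS : S' = S by apply: sumS_inj.
  exists (sumS S); split => //; by rewrite -e2 eS.
- move=> [N [hk hj]].
  have [S [e1 e2]] := sumS_ex (bnd _ hj).
  apply/eqP; rewrite eqn_leq le1 /=; apply/card_gt0P; exists S.
  rewrite inE e2 hk eqxx /=; apply/eqP; by rewrite -[X in _ = X]hj -e1.
Qed.

Lemma PsiEq k l m j k' l' m' j' : 0 < m -> 0 < m' ->
  (P k l m j <-> P k' l' m' j') -> Psi k l m j = Psi k' l' m' j'.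
Proof.
move=> hm hm' h.
have [a1 a2] := PsiP k l j hm; have [b1 b2] := PsiP k' l' j' hm'.
move: a1 b1 a2 b2; case: (Psi k l m j) => [|[|x]] //; case: (Psi k' l' m' j') => [|[|y]] // _ _ A B.
- by have := proj2 A (proj2 h (proj1 B erefl)).
- by have := proj2 B (proj1 h (proj1 A erefl)).
Qed.

Lemma Psi0 k l m j : 0 < m -> ~ P k l m j -> Psi k l m j = 0.
Proof.
move=> hm hn; have [a1 a2] := PsiP k l j hm.
move: a1; case: (Psi k l m j) a2 => [|[|x]] a2 //.
by move=> _; case: hn; apply/a2.
Qed.

Lemma collatzP n j : (collatz n == j) =
  ((~~ odd n) && (n == 2 * j)) || (odd n && (3 * n + 1 == 2 * j)).
Proof.
rewrite /collatz; case ho: (odd n) => /=; have := modn2 n; rewrite ho => hm;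
  rewrite -divn2; by apply/idP/idP => /eqP h; apply/eqP; lia.
Qed.

Lemma TopE (g : nat -> nat) j :
  ((forall n, ~ (odd n /\ 3 * n + 1 = 2 * j)) /\ Top g j = g (2 * j)) \/
  exists n1, [/\ odd n1, 3 * n1 + 1 = 2 * j & Top g j = g (2 * j) + g n1].
Proof.
have h2 : 2 * j < (2 * j).+1 by [].
rewrite /Top (bigD1 (Ordinal h2)) /=; last by rewrite collatzP oddM /= eqxx.
case: (classic (exists n1, odd n1 /\ 3 * n1 + 1 = 2 * j)) => [[n1 [o1 e1]] | hn].
- right; exists n1; split => //.
  have h1 : n1 < (2 * j).+1 by lia.
  have hne : n1 != 2 * j by apply/eqP => e; rewrite e oddM in o1.
  rewrite (bigD1 (Ordinal h1)) /=; last first.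
    by rewrite collatzP o1 e1 eqxx orbT /= -val_eqE /=.
  rewrite big_pred0 ?addn0 // => i /=.
  apply/negP; rewrite collatzP -!val_eqE /=.
  move=> /andP[/andP[/orP[/andP[_ /eqP a]|/andP[oi /eqP b]] c] d].
  + by rewrite a eqxx in c.
  + have : nat_of_ord i = n1 by lia.
    by move=> e; rewrite e eqxx in d.
- left; split.
    by move=> n hn'; apply: hn; exists n.
  rewrite big_pred0 ?addn0 // => i /=.
  apply/negP; rewrite collatzP -!val_eqE /=.
  move=> /andP[/orP[/andP[_ /eqP a]|/andP[oi /eqP b]] c].
  + by rewrite a eqxx in c.
  + by apply: hn; exists i.
Qed.

Lemma oddE n : odd n = (n %% 2 == 1).
Proof. by rewrite modn2; case: odd. Qed.

Lemma evenE l : ~~ odd l -> exists a, l = 2 * a.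
Proof. rewrite oddE => h; exists (l %/ 2); lia. Qed.
Lemma oddE' l : odd l -> exists a, l = 2 * a + 1.
Proof. rewrite oddE => h; exists (l %/ 2); lia. Qed.
Lemma par N : exists N', N = 2 * N' \/ N = 2 * N' + 1.
Proof. exists (N %/ 2); lia. Qed.

Theorem mainTheorem14 (k l m : nat) : 1 <= k -> 1 <= m ->
  [/\ (~~ odd l -> ~~ odd m -> forall j,
         Top (Psi k l m) j = Psi k l./2 m./2 j),
      (odd l -> ~~ odd m -> forall j,
         Top (Psi k l m) j = Psi k (3 * l + 1)./2 (3 * m)./2 j),
      (~~ odd l -> odd m -> forall j,
         Top (Psi k l m) j = Psi k l./2 m j + Psi k.-1 (3 * (l + m) + 1)./2 (3 * m) j)
    & (odd l -> odd m -> forall j,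
         Top (Psi k l m) j = Psi k (3 * l + 1)./2 (3 * m) j + Psi k.-1 (l + m)./2 m j)].
Proof.
move=> hk hm; split.
- move=> /evenE [a ?] /evenE [b ?] j; subst l m.
  have -> : (2 * a)./2 = a by rewrite -divn2; lia.
  have -> : (2 * b)./2 = b by rewrite -divn2; lia.
  have hb : 0 < b by lia.
  have e1 : Psi k (2 * a) (2 * b) (2 * j) = Psi k a b j.
    apply: PsiEq => //; split => [[N [h1 h2]]|[N [h1 h2]]]; exists N; split => //; lia.
  case: (TopE (Psi k (2 * a) (2 * b)) j) => [[_ ->] | [n1 [o1 e2 ->]]]; rewrite e1 //.
  rewrite (@Psi0 _ _ _ n1) ?addn0 //; try lia.
  move=> [N [_ h]]; rewrite oddE in o1; lia.
- move=> /oddE' [a ?] /evenE [b ?] j; subst l m.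
  have -> : (3 * (2 * a + 1) + 1)./2 = 3 * a + 2 by rewrite -divn2; lia.
  have -> : (3 * (2 * b))./2 = 3 * b by rewrite -divn2; lia.
  have e0 : Psi k (2 * a + 1) (2 * b) (2 * j) = 0.
    by apply: Psi0; [lia | move=> [N [_ h]]; lia].
  case: (TopE (Psi k (2 * a + 1) (2 * b)) j) => [[hn ->] | [n1 [o1 e2 ->]]]; rewrite e0.
  + symmetry; apply: Psi0; first lia.
    move=> [N [_ h]]; apply: (hn (2 * a + 1 + 2 * b * N)); split; last lia.
    by rewrite oddE; apply/eqP; lia.
  + apply: PsiEq; [lia|lia|]; rewrite oddE in o1.
    split => [[N [h1 h2]]|[N [h1 h2]]]; exists N; split => //; lia.
- move=> /evenE [a ?] /oddE' [b ?] j; subst l m.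
  have -> : (2 * a)./2 = a by rewrite -divn2; lia.
  have -> : (3 * (2 * a + (2 * b + 1)) + 1)./2 = 3 * a + 3 * b + 2 by rewrite -divn2; lia.
  have e1 : Psi k (2 * a) (2 * b + 1) (2 * j) = Psi k a (2 * b + 1) j.
    apply: PsiEq; [lia|lia|]; split.
    + move=> [N [h1 h2]]; have [N' [eN|eN]] := par N; subst N.
      * by exists N'; rewrite pc_double in h1; split => //; lia.
      * exfalso; lia.
    + move=> [N [h1 h2]]; exists (2 * N); rewrite pc_double; split => //; lia.
  case: (TopE (Psi k (2 * a) (2 * b + 1)) j) => [[hn ->] | [n1 [o1 e2 ->]]]; rewrite e1.
  + rewrite (@Psi0 k.-1 _ (3 * (2 * b + 1))) ?addn0 //; try lia.
    move=> [N [_ h]]; apply: (hn (2 * a + (2 * b + 1) * (2 * N + 1))); split; last lia.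
    by rewrite oddE; apply/eqP; lia.
  + congr (_ + _); apply: PsiEq; [lia|lia|]; rewrite oddE in o1; split.
    * move=> [N [h1 h2]]; have [N' [eN|eN]] := par N; subst N.
      -- exfalso; lia.
      -- by exists N'; rewrite pc_doubleS in h1; split; lia.
    * move=> [N [h1 h2]]; exists (2 * N + 1); rewrite pc_doubleS; split; lia.
- move=> /oddE' [a ?] /oddE' [b ?] j; subst l m.
  have -> : (3 * (2 * a + 1) + 1)./2 = 3 * a + 2 by rewrite -divn2; lia.
  have -> : (2 * a + 1 + (2 * b + 1))./2 = a + b + 1 by rewrite -divn2; lia.
  have e1 : Psi k (2 * a + 1) (2 * b + 1) (2 * j) = Psi k.-1 (a + b + 1) (2 * b + 1) j.
    apply: PsiEq; [lia|lia|]; split.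
    + move=> [N [h1 h2]]; have [N' [eN|eN]] := par N; subst N.
      * exfalso; lia.
      * by exists N'; rewrite pc_doubleS in h1; split; lia.
    + move=> [N [h1 h2]]; exists (2 * N + 1); rewrite pc_doubleS; split; lia.
  case: (TopE (Psi k (2 * a + 1) (2 * b + 1)) j) => [[hn ->] | [n1 [o1 e2 ->]]]; rewrite e1 addnC.
  + rewrite (@Psi0 k _ (3 * (2 * b + 1))) ?addn0 //; try lia.
    move=> [N [_ h]]; apply: (hn (2 * a + 1 + (2 * b + 1) * (2 * N))); split; last lia.
    by rewrite oddE; apply/eqP; lia.
  + congr (_ + _); apply: PsiEq; [lia|lia|]; rewrite oddE in o1; split.
    * move=> [N [h1 h2]]; have [N' [eN|eN]] := par N; subst N.
      -- by exists N'; rewrite pc_double in h1; split; lia.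
      -- exfalso; lia.
    * move=> [N [h1 h2]]; exists (2 * N); rewrite pc_double; split; lia.
Qed.
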